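(* Consider a cooperative multi-agent Markov decision process with $N$ agents, finite individual state space $\mathcal S$, finite individual action space $\mathcal A$, joint state space $\mathcal S^N$, joint action space $\mathcal A^N$, transition kernel $\mathbb P$, shared reward $\mathrm r$ and discount factor $\gamma\in(0,1)$, and suppose that for every $(\mathbf s_t,\mathbf a_t)\in\mathcal S^N\times\mathcal A^N$, every $\mathbf s_{t+1}\in\mathcal S^N$ and every permutation $\kappa$ of the agent indices, $$\mathrm r(\mathbf s_t,\mathbf a_t)=\mathrm r(\kappa(\mathbf s_t),\kappa(\mathbf a_t)),\qquad \mathbb P(\mathbf s_{t+1}\mid \mathbf s_t,\mathbf a_t)=\mathbb P(\kappa(\mathbf s_{t+1})\mid \kappa(\mathbf s_t),\kappa(\mathbf a_t)).$$ Then (i) there exists an optimal policy $\nu^*$ that is permutation invariant, i.e. $\nu^*(\mathbf s,\mathbf a)=\nu^*(\kappa(\mathbf s),\kappa(\mathbf a))$ for every permutation $\kappa$; and (ii) for every permutation invariant policy $\nu$, the value function and state-action value function are permutation invariant: $V^\nu(\mathbf s)=V^\nu(\kappa(\mathbf s))$ and $Q^\nu(\mathbf s,\mathbf a)=Q^\nu(\kappa(\mathbf s),\kappa(\mathbf a))$ for all $\mathbf s,\mathbf a$ and all permutations $\kappa$.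
   Context: A permutation $\kappa$ of $\{1,\dots,N\}$ acts on $\mathbf s=(s_1,\dots,s_N)$ and $\mathbf a=(a_1,\dots,a_N)$ by permuting coordinates (the same permutation applied to states and actions). A (joint) policy $\nu$ assigns to each joint state $\mathbf s$ a distribution $\nu(\cdot\mid\mathbf s)$ over $\mathcal A^N$; we write $\nu(\mathbf s,\mathbf a)=\nu(\mathbf a\mid \mathbf s)$. The value function is $V^\nu(\mathbf s)=(1-\gamma)\mathbb E\{\sum_{t\ge0}\gamma^t\mathrm r(\mathbf s_t,\mathbf a_t)\mid \mathbf s_0=\mathbf s,\ \mathbf a_t\sim\nu(\cdot\mid\mathbf s_t)\ \forall t\ge 0\}$, and $Q^\nu(\mathbf s,\mathbf a)=\mathbb E_{\mathbf s'\sim\mathbb P(\cdot\mid\mathbf s,\mathbf a)}\{\mathrm r(\mathbf s,\mathbf a)+\gamma V^\nu(\mathbf s')\}$. An optimal policy is one maximizing $V^\nu(\mathbf s)$ for all $\mathbf s$. *)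

(* Defs.v *)
From HB Require Import structures.
From mathcomp Require Import all_boot all_order all_algebra all_fingroup.
From mathcomp Require Import all_classical all_reals all_analysis.
Set Implicit Arguments. Unset Strict Implicit. Unset Printing Implicit Defensive.
Import Order.TTheory GRing.Theory Num.Theory.
Local Open Scope ring_scope.

Definition joint (N : nat) (T : finType) := {ffun 'I_N -> T}.

Definition pact (N : nat) (T : finType) (k : {perm 'I_N}) (x : joint N T)
  : joint N T := [ffun i => x (k i)].

Section MDP.
Variables (R : realType) (N : nat) (S A : finType).
Notation JS := (joint N S).
Notation JA := (joint N A).

Definition is_kernel (P : JS -> JA -> JS -> R) : Prop :=
  (forall s a s', 0 <= P s a s') /\ (forall s a, \sum_(s' : JS) P s a s' = 1).

Definition is_policy (nu : JS -> JA -> R) : Prop :=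
  (forall s a, 0 <= nu s a) /\ (forall s, \sum_(a : JA) nu s a = 1).

Definition perm_inv_policy (nu : JS -> JA -> R) : Prop :=
  forall (k : {perm 'I_N}) s a, nu s a = nu (pact k s) (pact k a).

Variables (P : JS -> JA -> JS -> R) (r : JS -> JA -> R) (gamma : R).

Fixpoint state_dist (nu : JS -> JA -> R) (s0 : JS) (t : nat) : JS -> R :=
  match t with
  | 0 => fun s => if s == s0 then 1 else 0
  | t'.+1 => fun s' =>
      \sum_(s : JS) \sum_(a : JA) state_dist nu s0 t' s * nu s a * P s a s'
  end.

Definition exp_reward (nu : JS -> JA -> R) (s0 : JS) (t : nat) : R :=
  \sum_(s : JS) \sum_(a : JA) state_dist nu s0 t s * nu s a * r s a.

Definition Vfun (nu : JS -> JA -> R) (s0 : JS) : R :=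
  (1 - gamma) *
  limn (fun n => \sum_(0 <= t < n) gamma ^+ t * exp_reward nu s0 t).

Definition Qfun (nu : JS -> JA -> R) (s : JS) (a : JA) : R :=
  \sum_(s' : JS) P s a s' * (r s a + gamma * Vfun nu s').

Definition optimal_policy (nu : JS -> JA -> R) : Prop :=
  is_policy nu /\
  forall nu', is_policy nu' -> forall s, Vfun nu' s <= Vfun nu s.

End MDP.

(* Main.v *)
Require Import Defs.
From HB Require Import structures.
From mathcomp Require Import all_boot all_order all_algebra all_fingroup.
From mathcomp Require Import all_classical all_reals all_analysis.
From mathcomp Require Import ring lra.
Import numFieldNormedType.Exports.
Import Order.TTheory GRing.Theory Num.Theory.
Local Open Scope classical_set_scope.
Local Open Scope ring_scope.
Set Implicit Arguments. Unset Strict Implicit.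

Section Aux.
Variables (R : realType) (N : nat) (S A : finType).
Notation JS := (joint N S).
Notation JA := (joint N A).
Variables (P : JS -> JA -> JS -> R) (r : JS -> JA -> R) (gamma : R).

Definition Top (nu : JS -> JA -> R) (v : JS -> R) (s : JS) : R :=
  \sum_(a : JA) nu s a * (r s a + gamma * \sum_(s' : JS) P s a s' * v s').

Definition wsum (nu : JS -> JA -> R) (s : JS) (n : nat) : R :=
  \sum_(0 <= t < n) gamma ^+ t * exp_reward P r nu s t.

Lemma sd_S nu s0 t s' : state_dist P nu s0 t.+1 s' =
  \sum_(s : JS) \sum_(a : JA) state_dist P nu s0 t s * nu s a * P s a s'.
Proof. by []. Qed.

Lemma sd_first nu s0 t s :
  state_dist P nu s0 t.+1 s =
  \sum_(s1 : JS) \sum_(a : JA) nu s0 a * P s0 a s1 * state_dist P nu s1 t s.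
Proof.
elim: t s => [|t IH] s.
  rewrite /= (bigD1 s0) //= eqxx.
  rewrite [X in _ + X]big1 => [|x xs0]; last first.
    by rewrite (negbTE xs0) big1 // => a _; rewrite !mul0r.
  rewrite addr0 (bigD1 s) //=.
  rewrite [X in _ + X]big1 => [|x xs]; last first.
    by apply: big1 => a _; rewrite eq_sym (negbTE xs) mulr0.
  by rewrite addr0; apply: eq_bigr => a _; rewrite eqxx mul1r mulr1.
rewrite sd_S.
transitivity (\sum_(x : JS) \sum_(a : JA) \sum_(s1 : JS) \sum_(b : JA)
   nu s0 b * P s0 b s1 * (state_dist P nu s1 t x * nu x a * P x a s)).
  apply: eq_bigr => x _; apply: eq_bigr => a _.
  rewrite IH -mulrA big_distrl /=; apply: eq_bigr => s1 _.
  rewrite big_distrl /=; apply: eq_bigr => b _.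
  by rewrite !mulrA.
under eq_bigr => x _ do rewrite exchange_big /=.
rewrite exchange_big /=; apply: eq_bigr => s1 _.
under eq_bigr => x _ do rewrite exchange_big /=.
rewrite exchange_big /=; apply: eq_bigr => b _.
rewrite big_distrr /=; apply: eq_bigr => x _.
by rewrite big_distrr.
Qed.
Lemma er_0 nu s0 : exp_reward P r nu s0 0 = \sum_(a : JA) nu s0 a * r s0 a.
Proof.
rewrite /exp_reward (bigD1 s0) //= eqxx.
rewrite [X in _ + X]big1 => [|x xs0]; last first.
  by rewrite (negbTE xs0) big1 // => a _; rewrite !mul0r.
by rewrite addr0; apply: eq_bigr => a _; rewrite mul1r.
Qed.

Lemma er_S nu s0 t : exp_reward P r nu s0 t.+1 =
  \sum_(s1 : JS) \sum_(a : JA) nu s0 a * P s0 a s1 * exp_reward P r nu s1 t.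
Proof.
rewrite /exp_reward.
transitivity (\sum_(x : JS) \sum_(a : JA) \sum_(s1 : JS) \sum_(b : JA)
   nu s0 b * P s0 b s1 * (state_dist P nu s1 t x * nu x a * r x a)).
  apply: eq_bigr => x _; apply: eq_bigr => a _.
  rewrite sd_first -mulrA big_distrl /=; apply: eq_bigr => s1 _.
  rewrite big_distrl /=; apply: eq_bigr => b _.
  by rewrite !mulrA.
under eq_bigr => x _ do rewrite exchange_big /=.
rewrite exchange_big /=; apply: eq_bigr => s1 _.
under eq_bigr => x _ do rewrite exchange_big /=.
rewrite exchange_big /=; apply: eq_bigr => b _.
rewrite big_distrr /=; apply: eq_bigr => x _.
by rewrite big_distrr.
Qed.

Lemma wsum_rec nu s n :
  wsum nu s n.+1 = Top nu (fun s' => wsum nu s' n) s.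
Proof.
rewrite /wsum /Top big_nat_recl // expr0 mul1r er_0.
under [RHS]eq_bigr => a _ do rewrite mulrDr.
rewrite big_split /=; congr (_ + _).
transitivity (gamma * \sum_(0 <= t < n) \sum_(s1 : JS) \sum_(a : JA)
   nu s a * P s a s1 * (gamma ^+ t * exp_reward P r nu s1 t)).
  rewrite big_distrr /=; apply: eq_bigr => t _.
  rewrite er_S exprS -mulrA; congr (_ * _).
  rewrite big_distrr /=; apply: eq_bigr => s1 _.
  rewrite big_distrr /=; apply: eq_bigr => a _.
  by rewrite mulrCA.
transitivity (gamma * \sum_(a : JA) \sum_(s1 : JS) \sum_(0 <= t < n)
   nu s a * P s a s1 * (gamma ^+ t * exp_reward P r nu s1 t)).
  congr (_ * _).
  rewrite exchange_big /=.
  under eq_bigr => s1 _ do rewrite exchange_big /=.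
  by rewrite exchange_big.
rewrite big_distrr /=; apply: eq_bigr => a _.
rewrite [RHS]mulrCA; congr (_ * _).
rewrite big_distrr /=; apply: eq_bigr => s1 _.
by rewrite mulrA big_distrr.
Qed.
Hypothesis hg0 : 0 < gamma.
Hypothesis hg1 : gamma < 1.
Hypothesis hPk : is_kernel P.

Lemma sd_ge0 nu : is_policy nu -> forall s0 t s, 0 <= state_dist P nu s0 t s.
Proof.
move=> [nu0 _] s0 t; elim: t => [|t IH] s /=; first by case: eqP.
apply: sumr_ge0 => x _; apply: sumr_ge0 => a _.
by rewrite !mulr_ge0 //; case: hPk.
Qed.

Lemma sd_sum nu : is_policy nu -> forall s0 t, \sum_(s : JS) state_dist P nu s0 t s = 1.
Proof.
move=> [_ nu1] s0; elim => [|t IH] /=.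
  rewrite (bigD1 s0) //= eqxx big1 ?addr0 // => x /negbTE -> //.
rewrite exchange_big /= -{}[RHS]IH; apply: eq_bigr => x _.
rewrite exchange_big /=.
transitivity (\sum_(a : JA) state_dist P nu s0 t x * nu x a).
  apply: eq_bigr => a _; rewrite -big_distrr /=.
  by case: hPk => _ ->; rewrite mulr1.
by rewrite -big_distrr /= nu1 mulr1.
Qed.

Definition Mr := \sum_(s : JS) \sum_(a : JA) `|r s a|.

Lemma Mr_ge0 : 0 <= Mr.
Proof. by apply: sumr_ge0 => s _; apply: sumr_ge0. Qed.

Lemma r_le_Mr s a : `|r s a| <= Mr.
Proof.
rewrite /Mr (bigD1 s) //= (bigD1 a) //= -addrA lerDl.
apply: addr_ge0; first by apply: sumr_ge0.
by apply: sumr_ge0 => x _; apply: sumr_ge0.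
Qed.

Lemma er_bound nu : is_policy nu -> forall s t, `|exp_reward P r nu s t| <= Mr.
Proof.
move=> hnu s t; have [nu0 nu1] := hnu; rewrite /exp_reward.
apply: (le_trans (ler_norm_sum _ _ _)).
apply: (@le_trans _ _ (\sum_(x : JS) \sum_(a : JA) state_dist P nu s t x * nu x a * Mr)).
  apply: ler_sum => x _; apply: (le_trans (ler_norm_sum _ _ _)).
  apply: ler_sum => a _; rewrite normrM ger0_norm ?mulr_ge0 ?sd_ge0 //.
  by apply: ler_wpM2l; [rewrite mulr_ge0 ?sd_ge0|apply: r_le_Mr].
rewrite -[X in _ <= X]mul1r -(sd_sum hnu s t) big_distrl /=; apply: ler_sum => x _.
by rewrite -big_distrl -big_distrr /= nu1 mulr1.
Qed.
Lemma wsum_S nu s n :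
  wsum nu s n.+1 = wsum nu s n + gamma ^+ n * exp_reward P r nu s n.
Proof. by rewrite /wsum big_nat_recr. Qed.

Lemma wsum0 nu s : wsum nu s 0 = 0.
Proof. by rewrite /wsum big_geq. Qed.

Lemma gabs : `|gamma| < 1.
Proof. by rewrite gtr0_norm. Qed.

Lemma wsum_cvg nu : is_policy nu -> forall s, cvgn (wsum nu s).
Proof.
move=> hnu s; set K := Mr / (1 - gamma).
have g1 : 0 < 1 - gamma by rewrite subr_gt0.
have K0 : 0 <= K by rewrite divr_ge0 ?Mr_ge0 // ltW.
have hKg : K * (1 - gamma) = Mr by rewrite /K divfK // gt_eqF.
pose c n := wsum nu s n - K * gamma ^+ n.
pose d n := wsum nu s n + K * gamma ^+ n.
have cinc : nondecreasing_seq c.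
  apply/nondecreasing_seqP => n; rewrite /c wsum_S.
  have := er_bound hnu s n; rewrite ler_norml => /andP[h1 h2].
  set e := exp_reward P r nu s n in h1 h2 *; set w := wsum nu s n.
  have E : w + gamma ^+ n * e - K * gamma ^+ n.+1 - (w - K * gamma ^+ n)
      = gamma ^+ n * (e + Mr) by rewrite -hKg exprS; ring.
  rewrite -subr_ge0 E; apply: mulr_ge0; [exact: exprn_ge0 (ltW hg0)|lra].
have ddec : nonincreasing_seq d.
  apply/nonincreasing_seqP => n; rewrite /d wsum_S.
  have := er_bound hnu s n; rewrite ler_norml => /andP[h1 h2].
  set e := exp_reward P r nu s n in h1 h2 *; set w := wsum nu s n.
  have E : w + K * gamma ^+ n - (w + gamma ^+ n * e + K * gamma ^+ n.+1)
      = gamma ^+ n * (Mr - e) by rewrite -hKg exprS; ring.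
  rewrite -subr_ge0 E; apply: mulr_ge0; [exact: exprn_ge0 (ltW hg0)|lra].
have cc : cvgn c.
  apply: nondecreasing_is_cvgn => //; exists K => _ [n _ <-].
  apply: (@le_trans _ _ (d n)).
    by rewrite /c /d lerD2l -(lerN2) opprK (le_trans _ (mulr_ge0 K0 (exprn_ge0 _ (ltW hg0)))) // oppr_le0 mulr_ge0 ?exprn_ge0 // ltW.
  by have := ddec 0%N n (leq0n n); rewrite /d wsum0 expr0 mulr1 add0r.
have -> : wsum nu s = c + geometric K gamma.
  by apply/funext => n; rewrite /c /geometric /= subrK.
by apply: is_cvgD => //; apply: cvgP (cvg_geometric K gabs).
Qed.
Definition W nu s : R := limn (wsum nu s).

Lemma term_le_sum (f : JS -> R) s : `|f s| <= \sum_(x : JS) `|f x|.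
Proof.
by rewrite (bigD1 s) //= lerDl; apply: sumr_ge0.
Qed.

Lemma Top_mono nu v v' : is_policy nu -> (forall s, v s <= v' s) ->
  forall s, Top nu v s <= Top nu v' s.
Proof.
move=> [nu0 _] hv s; apply: ler_sum => a _; apply: ler_wpM2l => //.
rewrite lerD2l; apply: ler_wpM2l; first exact: ltW.
apply: ler_sum => s' _; apply: ler_wpM2l => //; by case: hPk.
Qed.

Lemma Top_shift nu v c : is_policy nu -> forall s,
  Top nu (fun s => v s + c) s = Top nu v s + gamma * c.
Proof.
move=> [_ nu1] s; rewrite /Top.
transitivity (\sum_(a : JA) (nu s a * (r s a + gamma * \sum_(s' : JS) P s a s' * v s')
   + nu s a * (gamma * c))).
  apply: eq_bigr => a _; rewrite -mulrDr; congr (_ * _).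
  rewrite -addrA -mulrDr; congr (_ + _ * _).
  under eq_bigr => s' _ do rewrite mulrDr.
  by rewrite big_split /= -big_distrl /=; case: hPk => _ ->; rewrite mul1r.
by rewrite big_split /= -big_distrl /= nu1 mul1r.
Qed.

Lemma L_le nu v : is_policy nu -> (forall s, Top nu v s <= v s) ->
  forall s, W nu s <= v s.
Proof.
move=> hnu hv s; set C := \sum_(x : JS) `|v x|.
have key : forall n s, wsum nu s n <= v s + C * gamma ^+ n.
  elim => [|n IH] s1.
    rewrite wsum0 expr0 mulr1.
    have := term_le_sum v s1; rewrite -/C ler_norml => /andP[h1 h2]; lra.
  rewrite wsum_rec (le_trans (Top_mono hnu IH s1)) //.
  rewrite Top_shift // exprS mulrCA.
  by rewrite lerD2r.
rewrite /W -[v s]addr0.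
rewrite -(cvg_lim _ (cvgD (cvg_cst (v s)) (cvg_geometric C gabs))); last exact: norm_hausdorff.
apply: ler_lim.
- exact: wsum_cvg.
- exact: cvgP (cvgD (cvg_cst (v s)) (cvg_geometric C gabs)).
- by apply: nearW => n; apply: key.
Qed.

Lemma L_ge nu v : is_policy nu -> (forall s, v s <= Top nu v s) ->
  forall s, v s <= W nu s.
Proof.
move=> hnu hv s; set C := \sum_(x : JS) `|v x|.
have key : forall n s, v s - C * gamma ^+ n <= wsum nu s n.
  elim => [|n IH] s1.
    rewrite wsum0 expr0 mulr1.
    have := term_le_sum v s1; rewrite -/C ler_norml => /andP[h1 h2]; lra.
  rewrite wsum_rec; apply: le_trans (Top_mono hnu IH s1).
  rewrite Top_shift // exprS mulrN mulrCA.
  by rewrite lerD2r.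
rewrite /W -[v s]subr0.
rewrite -(cvg_lim _ (cvgB (cvg_cst (v s)) (cvg_geometric C gabs))); last exact: norm_hausdorff.
apply: ler_lim.
- exact: cvgP (cvgB (cvg_cst (v s)) (cvg_geometric C gabs)).
- exact: wsum_cvg.
- by apply: nearW => n; apply: key.
Qed.
Lemma W_cvg nu : is_policy nu -> forall s, wsum nu s n @[n --> \oo] --> W nu s.
Proof. by move=> hnu s; apply: wsum_cvg. Qed.

Lemma W_fix nu : is_policy nu -> forall s, W nu s = Top nu (W nu) s.
Proof.
move=> hnu s.
have h1 : wsum nu s n.+1 @[n --> \oo] --> W nu s.
  by rewrite (cvg_shiftS (fun n => wsum nu s n)); apply: W_cvg.
have h2 : wsum nu s n.+1 @[n --> \oo] --> Top nu (W nu) s.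
  under eq_fun => n do rewrite wsum_rec.
  rewrite /Top; apply: cvg_big => //; first exact: add_continuous.
  move=> a _; apply: cvgM; first exact: cvg_cst.
  apply: cvgD; first exact: cvg_cst.
  apply: cvgM; first exact: cvg_cst.
  apply: cvg_big => //; first exact: add_continuous.
  move=> s' _; apply: cvgM; first exact: cvg_cst.
  exact: W_cvg.
exact: (cvg_unique _ h1 h2).
Qed.
Lemma pactK (T : finType) (k : {perm 'I_N}) (x : joint N T) :
  pact k^-1 (pact k x) = x.
Proof. by apply/ffunP => i; rewrite !ffunE permKV. Qed.

Lemma pact_inj (T : finType) (k : {perm 'I_N}) : injective (@pact N T k).
Proof. by move=> x y /(congr1 (pact k^-1)); rewrite !pactK. Qed.

Hypothesis hrk : forall (k : {perm 'I_N}) (s : JS) (a : JA),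
      r s a = r (pact k s) (pact k a).
Hypothesis hPkk : forall (k : {perm 'I_N}) (s : JS) (a : JA) (s' : JS),
      P s a s' = P (pact k s) (pact k a) (pact k s').

Section Perm.
Variables (k : {perm 'I_N}) (nu nu' : JS -> JA -> R).
Hypothesis hnu' : forall s a, nu' s a = nu (pact k s) (pact k a).

Lemma sd_perm s0 t s :
  state_dist P nu' s0 t s = state_dist P nu (pact k s0) t (pact k s).
Proof.
elim: t s => [|t IH] s /=.
  by rewrite (inj_eq (@pact_inj S k)).
rewrite [RHS](reindex_inj (@pact_inj S k)) /=; apply: eq_bigr => x _.
rewrite [RHS](reindex_inj (@pact_inj A k)) /=; apply: eq_bigr => a _.
by rewrite IH hnu' -hPkk.
Qed.

Lemma er_perm s0 t :
  exp_reward P r nu' s0 t = exp_reward P r nu (pact k s0) t.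
Proof.
rewrite /exp_reward [RHS](reindex_inj (@pact_inj S k)) /=; apply: eq_bigr => x _.
rewrite [RHS](reindex_inj (@pact_inj A k)) /=; apply: eq_bigr => a _.
by rewrite sd_perm hnu' -hrk.
Qed.

Lemma W_perm s : W nu' s = W nu (pact k s).
Proof.
rewrite /W; have -> : wsum nu' s = wsum nu (pact k s); last by [].
rewrite /wsum; apply/funext => n.
by apply: eq_bigr => t _; rewrite er_perm.
Qed.
End Perm.
Definition detp (d : {ffun JS -> JA}) : JS -> JA -> R := fun s a => (a == d s)%:R.

Lemma detp_policy d : is_policy (detp d).
Proof.
split => [s a|s]; first by rewrite /detp ler0n.
rewrite /detp (bigD1 (d s)) //= eqxx big1 ?addr0 // => a /negbTE -> //.
Qed.

Definition Qv (v : JS -> R) s a := r s a + gamma * \sum_(s' : JS) P s a s' * v s'.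

Lemma TQ nu v s : Top nu v s = \sum_(a : JA) nu s a * Qv v s a.
Proof. by []. Qed.

Lemma Top_det d v s : Top (detp d) v s = Qv v s (d s).
Proof.
rewrite TQ /detp (bigD1 (d s)) //= eqxx mul1r big1 ?addr0 // => a /negbTE ->.
by rewrite mul0r.
Qed.

Lemma inv_part nu : perm_inv_policy nu -> forall k s a,
  Vfun P r gamma nu s = Vfun P r gamma nu (pact k s) /\
  Qfun P r gamma nu s a = Qfun P r gamma nu (pact k s) (pact k a).
Proof.
move=> hinv.
have hV : forall k s, Vfun P r gamma nu s = Vfun P r gamma nu (pact k s).
  move=> k s; change ((1 - gamma) * W nu s = (1 - gamma) * W nu (pact k s)).
  by rewrite -(W_perm (hinv k)).
move=> k s a; split; first exact: hV.
rewrite /Qfun [RHS](reindex_inj (@pact_inj S k)) /=; apply: eq_bigr => s' _.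
by rewrite -hPkk -hrk -hV.
Qed.

Lemma exists_opt (a0 : A) :
  exists nu, optimal_policy P r gamma nu /\ perm_inv_policy nu.
Proof.
pose d0 : {ffun JS -> JA} := [ffun _ => [ffun _ => a0]].
pose F d := \sum_(s : JS) W (detp d) s.
case: (@arg_maxP _ _ {ffun JS -> JA} d0 xpredT F isT) => ds0 _ hmax.
move: ds0 hmax => /= ds hmax.
pose v : JS -> R := W (detp ds).
have vfix : forall s, v s = Qv v s (ds s).
  move=> s; rewrite /v {1}(W_fix (detp_policy ds)); exact: (Top_det ds (W (detp ds)) s).
have hB : forall s a, Qv v s a <= v s.
  move=> s0 a1; rewrite leNgt; apply/negP => hlt.
  pose d' : {ffun JS -> JA} := [ffun s => if s == s0 then a1 else ds s].
  have hge : forall s, v s <= Top (detp d') v s.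
    move=> s; rewrite (Top_det d' v s) ffunE; case: eqP => [->|_]; first exact: ltW.
    by rewrite -vfix.
  have hW : forall s, v s <= W (detp d') s := L_ge (detp_policy d') hge.
  have hs0 : v s0 < W (detp d') s0.
    rewrite (W_fix (detp_policy d')).
    apply: (lt_le_trans _ (Top_mono (detp_policy d') hW s0)).
    by rewrite (Top_det d' v s0) ffunE eqxx.
  have : F ds < F d'.
    rewrite /F (bigD1 s0) //= [X in _ < X](bigD1 s0) //=.
    by apply: ltr_leD => //; apply: ler_sum => s _; exact: hW.
  by rewrite ltNge hmax.
have vopt : forall nu', is_policy nu' -> forall s, W nu' s <= v s.
  move=> nu' hnu'; have [nu0 nu1] := hnu'; apply: L_le => // s.
  rewrite TQ; apply: (@le_trans _ _ (\sum_(a : JA) nu' s a * v s)).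
    by apply: ler_sum => a _; apply: ler_wpM2l => //; exact: hB.
  by rewrite -big_distrl /= nu1 mul1r.
have vinv : forall k s, v (pact k s) = v s.
  have h : forall k s, v (pact k s) <= v s.
    move=> k s; rewrite /v.
    rewrite -(W_perm (k:=k) (nu:=detp ds)
                     (nu':=fun s a => detp ds (pact k s) (pact k a))) //.
    apply: vopt; split => [x a|x]; first by rewrite /detp ler0n.
    have := (detp_policy ds).2 (pact k x).
    by rewrite (reindex_inj (@pact_inj A k)).
  move=> k s; apply/eqP; rewrite eq_le h /=.
  by have := h (k^-1)%g (pact k s); rewrite pactK.
have Qinv : forall k s a, Qv v (pact k s) (pact k a) = Qv v s a.
  move=> k s a; rewrite /Qv -hrk; congr (_ + _ * _).
  rewrite [LHS](reindex_inj (@pact_inj S k)) /=; apply: eq_bigr => s' _.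
  by rewrite -hPkk vinv.
pose ind s a : R := (Qv v s a == v s)%:R.
pose Z s := \sum_(b : JA) ind s b.
have Zpos : forall s, 0 < Z s.
  move=> s; rewrite /Z (bigD1 (ds s)) //= /ind -vfix eqxx /= mulr1n.
  have h0 : 0 <= \sum_(i | i != ds s) (Qv v s i == v s)%:R :> R.
    by apply: sumr_ge0 => i _; rewrite ler0n.
  lra.
pose nus s a := ind s a / Z s.
have nus_pol : is_policy nus.
  split => [s a|s]; first by rewrite /nus divr_ge0 ?ler0n // ltW.
  by rewrite /nus -big_distrl /= mulfV // (gt_eqF (Zpos s)).
have nus_inv : perm_inv_policy nus.
  move=> k s a; rewrite /nus /ind Qinv vinv; congr (_ / _).
  rewrite /Z [RHS](reindex_inj (@pact_inj A k)) /=; apply: eq_bigr => b _.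
  by rewrite /ind Qinv vinv.
have Tfix : forall s, Top nus v s = v s.
  move=> s; rewrite TQ.
  transitivity (\sum_(a : JA) nus s a * v s).
    apply: eq_bigr => a _; rewrite /nus /ind.
    by case: eqP => [-> //|_]; rewrite !mul0r.
  by rewrite -big_distrl /= nus_pol.2 mul1r.
have Wnus : forall s, W nus s = v s.
  move=> s; apply/eqP; rewrite eq_le; apply/andP; split; [apply: L_le | apply: L_ge] => // x; by rewrite Tfix.
apply: (@ex_intro _ _ nus); split; last exact: nus_inv.
split; first exact: nus_pol.
move=> nu' hnu' s.
change ((1 - gamma) * W nu' s <= (1 - gamma) * W nus s).
rewrite Wnus; apply: ler_wpM2l; first by rewrite subr_ge0 ltW.
exact: vopt.
Qed.
End Aux.

Close Scope classical_set_scope.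
Local Open Scope ring_scope.

Theorem proposition1 (R : realType) (N : nat) (S A : finType) (a0 : A)
  (P : joint N S -> joint N A -> joint N S -> R)
  (r : joint N S -> joint N A -> R) (gamma : R) :
  0 < gamma < 1 ->
  is_kernel P ->
  (forall (k : {perm 'I_N}) (s : joint N S) (a : joint N A),
      r s a = r (pact k s) (pact k a)) ->
  (forall (k : {perm 'I_N}) (s : joint N S) (a : joint N A) (s' : joint N S),
      P s a s' = P (pact k s) (pact k a) (pact k s')) ->
  (exists nu : joint N S -> joint N A -> R,
      optimal_policy P r gamma nu /\ perm_inv_policy nu) /\
  (forall nu : joint N S -> joint N A -> R,
      is_policy nu -> perm_inv_policy nu ->
      forall (k : {perm 'I_N}) (s : joint N S) (a : joint N A),
        Vfun P r gamma nu s = Vfun P r gamma nu (pact k s) /\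
        Qfun P r gamma nu s a = Qfun P r gamma nu (pact k s) (pact k a)).

Proof.
move=> /andP[hg0 hg1] hPk hrk hPkk; split.
  exact: (exists_opt hg0 hg1 hPk hrk hPkk a0).
move=> nu _ hinv k s a.
exact: (@inv_part R N S A P r gamma hrk hPkk nu hinv k s a).
Qed.
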